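(* Let $\alpha$ be a composition and let $\lambda$ be the partition obtained by sorting the parts of $\alpha$ into weakly decreasing order. Then the fundamental quasi-symmetric function $F_\alpha$ occurs (with positive coefficient) in the expansion of the Schur function $s_\lambda$ in the basis of fundamental quasi-symmetric functions.
   Context: For a composition $\alpha$, $F_\alpha=\sum_{\beta}M_\beta$, summed over compositions $\beta$ refining $\alpha$, where $M_\beta=\sum_{i_1<\dots<i_k}x_{i_1}^{\beta_1}\cdots x_{i_k}^{\beta_k}$ for $\beta=(\beta_1,\dots,\beta_k)$. For a partition $\lambda$, $s_\lambda=\sum_T x^T$ over semistandard Young tableaux $T$ of shape $\lambda$ (rows weakly increasing, columns strictly increasing, entries positive integers), with $x^T=\prod_a x_a^{(\text{number of } a \text{ in } T)}$. The fundamental quasi-symmetric functions form a basis of the ring of quasi-symmetric functions, and $s_\lambda=\sum_{S}F_{\mathrm{Des}(S)}$ over standard Young tableaux $S$ of shape $\lambda$, where for $S$ with $N$ cells and descent set $\{i_1<\dots<i_k\}$ (the entries $i$ such that $i+1$ lies in a strictly lower row) $\mathrm{Des}(S)=(i_1,i_2-i_1,\dots,N-i_k)$. *)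

(* Defs.v *)
From mathcomp Require Import all_boot.
Set Implicit Arguments. Unset Strict Implicit. Unset Printing Implicit Defensive.

Definition is_composition (a : seq nat) : bool := all (fun x => 0 < x) a.

Definition sort_partition (a : seq nat) : seq nat := sort (fun m n => n <= m) a.

(* Tableaux: a list of rows (English convention, row 0 on top);
   "lower row" = larger row index. *)
Definition shape (t : seq (seq nat)) : seq nat := map size t.

Definition rows_increasing (t : seq (seq nat)) : bool :=
  all (fun r => sorted ltn r) t.

Definition cols_increasing (t : seq (seq nat)) : bool :=
  all (fun i => all (fun j => nth 0 (nth [::] t i) j < nth 0 (nth [::] t i.+1) j)
                    (iota 0 (size (nth [::] t i.+1))))
      (iota 0 (size t)).

Definition is_SYT (lam : seq nat) (t : seq (seq nat)) : bool :=
  [&& shape t == lam, perm_eq (flatten t) (iota 1 (sumn lam)),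
      rows_increasing t & cols_increasing t].

(* Explicit finite list of all SYT of shape lam (each listed once). *)
Definition SYT_list (lam : seq nat) : seq (seq (seq nat)) :=
  [seq t <- [seq reshape lam s | s <- permutations (iota 1 (sumn lam))] | is_SYT lam t].

Definition row_of (t : seq (seq nat)) (k : nat) : nat := find (fun r => k \in r) t.

Definition descents (t : seq (seq nat)) : seq nat :=
  [seq i <- iota 1 (sumn (shape t)).-1 | row_of t i < row_of t i.+1].

Definition set_to_comp (N : nat) (D : seq nat) : seq nat :=
  if N is 0 then [::]
  else [seq p.2 - p.1 | p <- zip (0 :: D) (rcons D N)].

Definition Des (t : seq (seq nat)) : seq nat :=
  set_to_comp (sumn (shape t)) (descents t).

(* Coefficient of F_alpha in s_lam = sum_{S SYT of shape lam} F_{Des S}. *)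
Definition coeff_F_in_schur (lam alpha : seq nat) : nat :=
  count (fun t => Des t == alpha) (SYT_list lam).

(* Main.v *)
Require Import Defs.
From mathcomp Require Import all_boot zify.
Set Implicit Arguments. Unset Strict Implicit. Unset Printing Implicit Defensive.

Notation gr := (fun m n : nat => n <= m).

Lemma gr_trans : transitive gr.
Proof. move=> y x z /= h1 h2; exact: leq_trans h2 h1. Qed.

Lemma iota_rcons m n : iota m n.+1 = rcons (iota m n) (m + n).
Proof. by rewrite -addn1 iotaD cats1. Qed.

Lemma count_take_le (T : eqType) (a : pred T) (s : seq T) n :
  count a (take n s) <= count a s.
Proof. by rewrite -{2}(cat_take_drop n s) count_cat leq_addr. Qed.

Lemma sorted_gr_prefix (s : seq nat) n r : sorted gr s ->
  count_mem r (take n s) = 0 \/ count_mem r.+1 (take n s) = count_mem r.+1 s.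
Proof.
elim: s n => [|a s IH] [|n] //=; try by left.
rewrite path_sortedE; last exact: gr_trans.
case/andP=> Hall Hs.
have [ear|near] := eqVneq a r.
  right; subst a.
  have H0 : count_mem r.+1 s = 0.
    apply/count_memPn/negP => /(allP Hall) /=; by rewrite ltnn.
  have := count_take_le (pred1 r.+1) s n.
  by rewrite H0 leqn0 => /eqP ->.
case: (IH n Hs) => H.
  by left; rewrite H.
by right; rewrite H.
Qed.

Lemma sorted_nth_count (s : seq nat) r x : sorted gr s -> r < size s ->
  (x <= nth 0 s r) = (r < count (fun y => x <= y) s).
Proof.
elim: s r => [|a s IH] r //=.
rewrite path_sortedE; last exact: gr_trans.
case/andP=> Hall Hs.
have Hc : x > a -> count (fun y => x <= y) s = 0.
  move=> xa; apply/eqP; rewrite -leqn0 leqNgt -has_count; apply/hasP=> [[y ys]] /=.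
  have := allP Hall y ys => /= ya xy. have := leq_trans xy ya. by rewrite leqNgt xa.
case: r => [|r] /=.
  case: (leqP x a) => xa //. by rewrite Hc.
rewrite ltnS => Hr. rewrite IH //.
case: (leqP x a) => xa. by rewrite add1n ltnS.
rewrite Hc // add0n ltn0.
Qed.

Fixpoint blk (f : nat -> nat) (K : nat) : seq nat :=
  if K is K'.+1 then nseq (f K') K' ++ blk f K' else [::].

Lemma blk_count f K r : count_mem r (blk f K) = if r < K then f r else 0.
Proof.
elim: K => [|K IH] //=. rewrite count_cat count_nseq IH /=.
case: (ltngtP r K) => h.
- have e1: (K == r) = false by apply/eqP; lia.
  have e2: r < K.+1 by lia.
  by rewrite e2.
- have e1: (K == r) = false by apply/eqP; lia.
  have e2: r < K.+1 = false by apply/negbTE; lia.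
  have e3: r < K = false by apply/negbTE; lia.
  by rewrite e2.
- subst r. by rewrite ltnSn mul1n addn0.
Qed.

Lemma blk_sorted f K : sorted gr (blk f K) && all (fun x => x < K) (blk f K).
Proof.
elim: K => [|K IH] //=. case/andP: IH => Hs Ha.
have Ha' : all (fun x => x < K.+1) (blk f K).
  apply/allP=> y /(allP Ha) /= h; exact: ltnW.
apply/andP; split; last by rewrite all_cat Ha' andbT; apply/allP=> y /nseqP [-> _].
elim: (f K) => [|n IHn] //=.
case: n IHn => [|n] IHn /=.
  case: (blk f K) Hs Ha => [|b s] //= -> /andP [hb _]. by rewrite ltnW.
by rewrite leqnn.
Qed.

Lemma blk_size f K : size (blk f K) = \sum_(r < K) f r.
Proof. elim: K => [|K IH]; first by rewrite big_ord0. by rewrite big_ord_recr /= size_cat size_nseq IH addnC. Qed.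

Lemma lam_sorted a : sorted gr (sort_partition a).
Proof. apply: sort_sorted => x y /=; by rewrite orbC leq_total. Qed.

Lemma lam_perm a : perm_eq (sort_partition a) a.
Proof. by rewrite /sort_partition perm_sort. Qed.

Lemma lam_count a (P : pred nat) : count P (sort_partition a) = count P a.
Proof. exact/permP/lam_perm. Qed.

Lemma lam_size a : size (sort_partition a) = size a.
Proof. exact: size_sort. Qed.

Lemma lam_sumn a : sumn (sort_partition a) = sumn a.
Proof. exact/perm_sumn/lam_perm. Qed.

Lemma count_rcons' (P : pred nat) a m : count P (rcons a m) = count P a + P m.
Proof. by rewrite -cats1 count_cat /= addn0. Qed.

Lemma interl1 a m r : nth 0 (sort_partition a) r <= nth 0 (sort_partition (rcons a m)) r.
Proof.
case: (ltnP r (size (sort_partition a))) => h; last by rewrite nth_default.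
set x := nth 0 (sort_partition a) r.
have H1 : r < count (fun y => x <= y) (sort_partition a) by rewrite -sorted_nth_count ?lam_sorted.
have H2 : r < count (fun y => x <= y) (sort_partition (rcons a m)).
  rewrite lam_count count_rcons'; rewrite lam_count in H1; lia.
have H3 : r < size (sort_partition (rcons a m)) by apply: leq_trans H2 (count_size _ _).
by rewrite sorted_nth_count ?lam_sorted.
Qed.

Lemma interl2 a m r : nth 0 (sort_partition (rcons a m)) r.+1 <= nth 0 (sort_partition a) r.
Proof.
case: (ltnP r.+1 (size (sort_partition (rcons a m)))) => h; last by rewrite nth_default.
set x := nth 0 (sort_partition (rcons a m)) r.+1.
have H1 : r.+1 < count (fun y => x <= y) (sort_partition (rcons a m)) by rewrite -sorted_nth_count ?lam_sorted.
have H2 : r < count (fun y => x <= y) (sort_partition a).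
  rewrite lam_count; rewrite lam_count count_rcons' in H1.
  move: H1; case: (x <= m) => /=; lia.
have H3 : r < size (sort_partition a) by apply: leq_trans H2 (count_size _ _).
by rewrite sorted_nth_count ?lam_sorted.
Qed.

Lemma lam_pos a m : all (fun x => 0 < x) (rcons a m) ->
  0 < nth 0 (sort_partition (rcons a m)) (size a).
Proof.
move=> Hp.
have Hs : size a < size (sort_partition (rcons a m)) by rewrite lam_size size_rcons.
rewrite sorted_nth_count ?lam_sorted // lam_count.
have -> : count (fun y => 0 < y) (rcons a m) = size (rcons a m) by apply/eqP; rewrite -all_count.
by rewrite size_rcons.
Qed.


Definition asc (w : seq nat) : seq nat :=
  [seq i <- iota 1 (size w).-1 | nth 0 w i.-1 < nth 0 w i].

Lemma stc_rcons n m D : 0 < n ->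
  set_to_comp (n + m) (rcons D n) = rcons (set_to_comp n D) m.
Proof.
case: n => [|n] // _. rewrite addSn /set_to_comp -rcons_cons zip_rcons; last by rewrite /= size_rcons.
by rewrite map_rcons /= -addSn addKn.
Qed.

Lemma sorted_noasc (B : seq nat) i : sorted gr B -> i.+1 < size B ->
  nth 0 B i < nth 0 B i.+1 = false.
Proof.
move=> Hs Hi. apply/negbTE; rewrite -leqNgt.
have := sorted_ltn_nth gr_trans 0 Hs. move=> /(_ i i.+1); apply; rewrite ?inE //; lia.
Qed.

Lemma asc_cat (w B : seq nat) K : all (fun x => x < K) w -> sorted gr B ->
  K <= nth 0 B 0 -> 0 < size B ->
  asc (w ++ B) = if w is [::] then [::] else rcons (asc w) (size w).
Proof.
move=> Hw Hs HK Hb.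
case: w Hw => [|x w'] Hw.
  rewrite /asc /= (eq_in_filter (a2 := pred0)) ?filter_pred0 // => i.
  rewrite mem_iota => /andP [h1 h2]. case: i h1 h2 => [|i] //= _ h2.
  apply: sorted_noasc => //; lia.
move: (x :: w') Hw (isT : 0 < size (x :: w')) => w Hw hn.
rewrite -/(rcons (asc w) (size w)).
rewrite /asc size_cat.
have -> : (size w + size B).-1 = (size w).-1 + size B by lia.
rewrite iotaD.
have -> : 1 + (size w).-1 = size w by lia.
have -> : iota (size w) (size B) = size w :: iota (size w).+1 (size B).-1.
  by case: (size B) Hb.
rewrite filter_cat /= -cats1.
congr (_ ++ _).
  apply: eq_in_filter => i; rewrite mem_iota => /andP [h1 h2].
  rewrite !nth_cat. have -> : i.-1 < size w by lia. by have -> : i < size w by lia.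
rewrite !nth_cat ltnn subnn.
have -> : (size w).-1 < size w by lia.
have -> : nth 0 w (size w).-1 < nth 0 B 0.
  apply: (leq_trans _ HK). have := allP Hw (nth 0 w (size w).-1); apply. apply: mem_nth. by case: (size w) hn.
rewrite (eq_in_filter (a2 := pred0)) ?filter_pred0 // => i.
rewrite mem_iota => /andP [h1 h2]. rewrite !nth_cat.
have -> : i.-1 < size w = false by apply/negbTE; lia.
have -> : i < size w = false by apply/negbTE; lia.
have -> : i - size w = (i.-1 - size w).+1 by lia.
apply: sorted_noasc => //; lia.
Qed.


Definition fdiff a m := fun r => nth 0 (sort_partition (rcons a m)) r - nth 0 (sort_partition a) r.

Fixpoint wordr (ra : seq nat) : seq nat :=
  if ra is m :: ra' then
    wordr ra' ++ blk (fun r => nth 0 (sort_partition (rev ra)) r - nth 0 (sort_partition (rev ra')) r) (size ra)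
  else [::].

Definition word a := wordr (rev a).

Lemma word_rcons a m : word (rcons a m) = word a ++ blk (fdiff a m) (size a).+1.
Proof. by rewrite /word rev_rcons /= rev_cons revK size_rev. Qed.

Lemma sumn_big s : sumn s = \sum_(r < size s) nth 0 s r.
Proof. elim: s => [|x s IH]; first by rewrite big_ord0. by rewrite big_ord_recl /= IH. Qed.

Lemma fdiff_count a m r : count_mem r (blk (fdiff a m) (size a).+1) = fdiff a m r.
Proof.
rewrite blk_count. case: ltnP => // h.
rewrite /fdiff !nth_default ?lam_size ?size_rcons //. exact: leq_trans (leqnSn _) h.
Qed.

Lemma fdiff_size a m : size (blk (fdiff a m) (size a).+1) = m.
Proof.
rewrite blk_size.
have H : \sum_(r < (size a).+1) fdiff a m r + \sum_(r < (size a).+1) nth 0 (sort_partition a) r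
   = \sum_(r < (size a).+1) nth 0 (sort_partition (rcons a m)) r.
  rewrite -big_split /=. apply: eq_bigr => r _. rewrite /fdiff subnK //. exact: interl1.
have e3 : \sum_(r < (size a).+1) nth 0 (sort_partition a) r = sumn a.
  rewrite big_ord_recr /= nth_default ?lam_size // addn0.
  have e1 := sumn_big (sort_partition a). by rewrite lam_size lam_sumn in e1.
move: H; rewrite e3.
have e2 := sumn_big (sort_partition (rcons a m)). rewrite lam_size size_rcons lam_sumn sumn_rcons in e2.
rewrite -e2. lia.
Qed.

Lemma word_inv a : all (fun x => 0 < x) a ->
 [/\ forall r, count_mem r (word a) = nth 0 (sort_partition a) r,
     forall n r, count_mem r.+1 (take n (word a)) <= count_mem r (take n (word a)),
     size (word a) = sumn a &
     set_to_comp (size (word a)) (asc (word a)) = a].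
Proof.
elim/last_ind: a => [|a m IH] Hp.
  by split => // r; rewrite nth_nil.
have Hp' : all (fun x => 0 < x) a by move: Hp; rewrite all_rcons => /andP [].
case: (IH Hp') => Hc Hl Hs Hd.
rewrite word_rcons.
set w := word a in Hc Hl Hs Hd *.
set B := blk (fdiff a m) (size a).+1.
have HcB r : count_mem r B = fdiff a m r by exact: fdiff_count.
have HsB : size B = m by exact: fdiff_size.
have HcW r : count_mem r (w ++ B) = nth 0 (sort_partition (rcons a m)) r.
  rewrite count_cat Hc HcB /fdiff subnKC //. exact: interl1.
have /andP [HsortB HallB] := blk_sorted (fdiff a m) (size a).+1.
have Hw : all (fun x => x < size a) w.
  apply/allP => x xw. have : 0 < count_mem x w by rewrite -has_count; apply/hasP; exists x => //=.
  rewrite Hc. case: (ltnP x (size a)) => // h. by rewrite nth_default ?lam_size.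
have Hpos := lam_pos Hp.
have HB0 : size a <= nth 0 B 0.
  rewrite /B /= /fdiff nth_cat size_nseq.
  have Hn : 0 < nth 0 (sort_partition (rcons a m)) (size a) - nth 0 (sort_partition a) (size a).
    by rewrite (nth_default 0 (_ : size (sort_partition a) <= size a)) ?lam_size // subn0.
  by rewrite Hn nth_nseq Hn.
have HBpos : 0 < size B.
  by rewrite HsB; move: Hp; rewrite all_rcons => /andP [].
split => //.
- move=> n r. rewrite take_cat. case: ltnP => hn; first exact: Hl.
  rewrite !count_cat.
  have := take_oversize hn. move=> _.
  have Hw' : take n w = w by rewrite take_oversize.
  rewrite !Hc.
  have i1 := interl1 a m r.+1. have i2 := interl2 a m r.
  have c1 : count_mem r.+1 (take (n - size w) B) <= count_mem r.+1 B by apply: count_take_le.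
  move: (HcB r.+1) c1; rewrite /fdiff => e1 c1.
  case: (sorted_gr_prefix (n - size w) r HsortB) => [->|->]; rewrite -/B; lia.
- by rewrite size_cat Hs HsB sumn_rcons.
- rewrite (asc_cat Hw HsortB HB0 HBpos) size_cat HsB.
  case: w Hc Hl Hs Hd Hw HcW => [|x w'] Hc Hl Hs Hd Hw HcW.
    move: Hd => /= <-. have hm : 0 < m by rewrite -HsB.
    by rewrite add0n -(prednK hm) /= subn0.
  rewrite stc_rcons // Hd //.
Qed.


Lemma lattice_nth (P Q : pred nat) m N : (forall i, Q i -> ~~ P i) ->
  (forall n, n <= N -> count Q (iota m n) <= count P (iota m n)) ->
  forall c, c < count Q (iota m N) ->
  nth 0 (filter P (iota m N)) c < nth 0 (filter Q (iota m N)) c.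
Proof.
move=> HQP. elim: N => [|n IH] Hl c Hc //.
have IH' := IH (fun k hk => Hl k (leq_trans hk (leqnSn n))).
have HlN := Hl n.+1 (leqnn _). rewrite iota_rcons !count_rcons' in HlN.
have Hln := Hl n (leqnSn n).
rewrite iota_rcons count_rcons' in Hc. rewrite iota_rcons !filter_rcons.
have memP d : d < count P (iota m n) -> nth 0 (filter P (iota m n)) d < m + n.
  move=> hd. have : nth 0 (filter P (iota m n)) d \in filter P (iota m n) by apply: mem_nth; rewrite size_filter.
  by rewrite mem_filter mem_iota => /andP [_ /andP [_ ]].
case Qn: (Q (m + n)).
  have Pn : P (m + n) = false by apply/negbTE/HQP.
  rewrite Pn. rewrite Qn Pn /= in HlN Hc.
  rewrite nth_rcons size_filter. case: (ltnP c (count Q (iota m n))) => hc; first exact: IH'.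
  have ec : c = count Q (iota m n) by lia.
  rewrite ec eqxx. rewrite -ec. apply: memP. lia.
rewrite Qn /= addn0 in Hc.
case: (P (m + n)); last exact: IH'.
rewrite nth_rcons size_filter.
have -> : c < count P (iota m n) by lia.
exact: IH'.
Qed.

Definition rowt (w : seq nat) r := [seq i <- iota 1 (size w) | nth 0 w i.-1 == r].
Definition tab (w : seq nat) k := mkseq (rowt w) k.

Lemma count_iota_take (w : seq nat) n r : n <= size w ->
  count (fun i => nth 0 w i.-1 == r) (iota 1 n) = count_mem r (take n w).
Proof.
move=> hn.
have -> : take n w = map (nth 0 w) (iota 0 n).
  rewrite -{1}(mkseq_nth 0 w) /mkseq -map_take take_iota. congr map; congr iota. lia.
rewrite count_map -(addn0 1) iotaDl count_map. apply: eq_count => i /=. by rewrite add0n.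
Qed.

Lemma size_rowt w r : size (rowt w r) = count_mem r w.
Proof. by rewrite size_filter count_iota_take // take_size. Qed.

Lemma perm_rows (g : nat -> nat) (s : seq nat) k :
  perm_eq (flatten [seq filter (fun i => g i == r) s | r <- iota 0 k]) (filter (fun i => g i < k) s).
Proof.
elim: k => [|k IH].
  by rewrite /= (eq_filter (a2 := pred0)) ?filter_pred0.
rewrite iota_rcons map_rcons flatten_rcons add0n.
apply: perm_trans (perm_cat IH (perm_refl _)) _.
rewrite perm_sym -(perm_filterC (fun i => g i < k) (filter (fun i => g i < k.+1) s)) perm_sym.
have e : forall a1 a2 : pred nat, a1 =1 a2 -> perm_eq (filter a1 s) (filter a2 s).
  by move=> a1 a2 h; rewrite (eq_filter h).
rewrite -!filter_predI. apply: perm_cat; apply: e => i /=; lia.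
Qed.


Lemma find_iota x m n : m <= x < m + n -> find (fun r => x == r) (iota m n) = x - m.
Proof.
elim: n m => [|n IH] m /andP [h1 h2]; first lia.
rewrite /=. case: eqP => [->|ne]; first by rewrite subnn.
rewrite IH; first lia. apply/andP; lia.
Qed.

Lemma row_of_tab w k i : all (fun x => x < k) w -> i < size w ->
  row_of (tab w k) i.+1 = nth 0 w i.
Proof.
move=> Hall hi. rewrite /row_of /tab /mkseq find_map.
rewrite (eq_find (a2 := fun r => nth 0 w i == r)).
  rewrite find_iota ?subn0 //. apply/andP; split => //. rewrite add0n. apply: (allP Hall). exact: mem_nth.
move=> r /=. rewrite mem_filter mem_iota /= add1n ltnS hi andbT //.
Qed.

Theorem theorem6p1 (alpha : seq nat) :
  is_composition alpha ->
  0 < coeff_F_in_schur (sort_partition alpha) alpha.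
Proof.
move=> Hp. case: (word_inv Hp) => Hc Hl Hs Hd.
set w := word alpha in Hc Hl Hs Hd.
set lam := sort_partition alpha in Hc *.
set k := size alpha.
set t := tab w k.
have Hall : all (fun x => x < k) w.
  apply/allP => x xw. have : 0 < count_mem x w by rewrite -has_count; apply/hasP; exists x => //=.
  rewrite Hc. case: (ltnP x k) => // h. by rewrite nth_default ?lam_size.
have Hsh : seq.shape t = lam.
  rewrite /shape /t /tab /mkseq -map_comp.
  rewrite (eq_map (g := nth 0 lam)); last by move=> r /=; rewrite size_rowt Hc.
  have e : k = size lam by rewrite lam_size.
  rewrite e. exact: mkseq_nth.
have Hsh2 : Defs.shape t = lam := Hsh.
have HN : sumn lam = size w by rewrite lam_sumn Hs.
have Hperm : perm_eq (flatten t) (iota 1 (sumn lam)).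
  rewrite HN.
  have := perm_rows (fun i => nth 0 w i.-1) (iota 1 (size w)) k.
  rewrite (all_filterP _) //.
  apply/allP => i; rewrite mem_iota => /andP [h1 h2]. apply: (allP Hall). apply: mem_nth. by case: i h1 h2 => // i _; rewrite add1n ltnS.
have Hrows : rows_increasing t.
  apply/allP => r /mapP [r0 _ ->]. rewrite /rowt. apply: sorted_filter; [exact: ltn_trans | exact: iota_ltn_sorted].
have Hcols : cols_increasing t.
  apply/allP => i; rewrite mem_iota size_mkseq => /andP [_ hi].
  apply/allP => j; rewrite mem_iota => /andP [_ hj].
  case: (ltnP i.+1 k) => hi1; last first.
    by rewrite (nth_default [::] (_ : size t <= i.+1)) ?size_mkseq in hj.
  rewrite /t /tab !nth_mkseq // in hj *. rewrite size_rowt add0n in hj.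
  apply: (lattice_nth (P := fun x => nth 0 w x.-1 == i) (Q := fun x => nth 0 w x.-1 == i.+1)).
  - move=> x /eqP ->. apply/eqP; lia.
  - move=> n hn; rewrite !count_iota_take //.
  - by rewrite count_iota_take // take_size.
have Hsyt : is_SYT lam t by apply/and4P; split => //; apply/eqP.
have Hdes : Des t = alpha.
  rewrite /Des /descents Hsh2 HN.
  have -> : [seq i <- iota 1 (size w).-1 | row_of t i < row_of t i.+1] = asc w.
    apply: eq_in_filter => i; rewrite mem_iota => /andP [h1 h2].
    case: i h1 h2 => [|i] // _ h2. rewrite !row_of_tab //; lia.
  exact: Hd.
rewrite /coeff_F_in_schur -has_count. apply/hasP; exists t; last by rewrite Hdes.
rewrite mem_filter Hsyt /=. apply/mapP; exists (flatten t); first by rewrite mem_permutations.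
by rewrite -{1}Hsh flattenK.
Qed.
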